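(* Let $f(x)=\frac1n\sum_{i=1}^nf_i(x)$ with each $f_i:\mathbb{R}^d\to\mathbb{R}$ differentiable and $\mu$-strongly convex ($\mu>0$), $x_\star$ the minimizer of $f$, and suppose there exists $\nu>0$ such that for all $x^1,\dots,x^n\in\mathbb{R}^d$, $$\frac1n\sum_{j=1}^n\Big\|\nabla f_j(x^j)-\frac1n\sum_{i=1}^n\nabla f_i(x^i)-\nabla f_j(x_\star)\Big\|^2\le\nu^2\frac1n\sum_{j=1}^n\|x^j-x_\star\|^2.$$ Let $x_0,w_0^1,\dots,w_0^n\in\mathbb{R}^d$ be arbitrary and run Point SAGA (see context). Then for any $\gamma>0$ and all $k\ge0$, $$\mathbb{E}[\Psi_k]\le\max\left\{\left(\frac1{1+\gamma\mu}\right)^k,\ \left(\frac{1}{1+\gamma\mu}\cdot\frac{\gamma\nu^2}{\mu n}+1-\frac1n\right)^k\right\}\Psi_0,\qquad \Psi_k:=\|x_k-x_\star\|^2+\gamma\mu\sum_{i=1}^n\|w_k^i-x_\star\|^2.$$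
   Context: Point SAGA: parameters $\gamma>0$, $x_0\in\mathbb{R}^d$, $w_0^1,\dots,w_0^n\in\mathbb{R}^d$. For $k\ge0$: sample $i_k$ uniformly from $[n]$ independently; $h_k=\nabla f_{i_k}(w_k^{i_k})-\frac1n\sum_{j=1}^n\nabla f_j(w_k^j)$; $x_{k+1}=\operatorname{prox}_{\gamma f_{i_k}}(x_k+\gamma h_k)$; $w_{k+1}^{i_k}=x_{k+1}$ and $w_{k+1}^j=w_k^j$ for $j\ne i_k$. $\operatorname{prox}_{\gamma\phi}(y):=\arg\min_x\{\phi(x)+\frac1{2\gamma}\|x-y\|^2\}$. $\mu$-strong convexity of $g$: $g(y)+\langle\nabla g(y),x-y\rangle+\frac{\mu}{2}\|x-y\|^2\le g(x)$ for all $x,y$. *)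

(* Defs.v *)
From HB Require Import structures.
From mathcomp Require Import all_boot all_order all_algebra.
From mathcomp Require Import all_classical all_reals all_analysis.
Set Implicit Arguments. Unset Strict Implicit. Unset Printing Implicit Defensive.
Import Order.TTheory GRing.Theory Num.Theory.
Import numFieldNormedType.Exports.
Local Open Scope ring_scope.

Section PointSAGA.
Variables (R : realType) (d n : nat).
Local Notation V := 'rV[R]_d.

Definition dotv (u v : V) : R := \sum_(j < d) u 0 j * v 0 j.
Definition sqnorm (v : V) : R := \sum_(j < d) (v 0 j) ^+ 2.

Definition grad (g : V -> R) (x : V) : V :=
  \row_(j < d) ('d g x) (delta_mx 0 j : V).

Definition strongly_convex (mu : R) (g : V -> R) : Prop :=
  forall x y : V, g y + dotv (grad g y) (x - y) + mu / 2 * sqnorm (x - y) <= g x.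

(* prox_{gamma phi}(y) := argmin_x { phi x + 1/(2 gamma) ||x - y||^2 }
   (chosen by classical choice; unique for strongly convex phi) *)
Definition prox (gamma : R) (phi : V -> R) (y : V) : V :=
  xget 0 [set x : V | forall z : V,
    phi x + (2 * gamma)^-1 * sqnorm (x - y) <= phi z + (2 * gamma)^-1 * sqnorm (z - y)].

Definition saga_step (f : 'I_n -> V -> R) (gamma : R)
    (st : V * ('I_n -> V)) (i : 'I_n) : V * ('I_n -> V) :=
  let: (x, w) := st in
  let h := grad (f i) (w i) - n%:R^-1 *: \sum_(j < n) grad (f j) (w j) in
  let x' := prox gamma (f i) (x + gamma *: h) in
  (x', fun j => if j == i then x' else w j).

Definition saga_run (f : 'I_n -> V -> R) (gamma : R) (x0 : V) (w0 : 'I_n -> V)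
    (s : seq 'I_n) : V * ('I_n -> V) :=
  foldl (saga_step f gamma) (x0, w0) s.

Definition Psi (gamma mu : R) (xs : V) (st : V * ('I_n -> V)) : R :=
  sqnorm (st.1 - xs) + gamma * mu * \sum_(i < n) sqnorm (st.2 i - xs).

(* E[Psi_k] with i_0,...,i_{k-1} i.i.d. uniform on [n]: average over all
   k-tuples of indices *)
Definition EPsi (f : 'I_n -> V -> R) (gamma mu : R) (xs x0 : V) (w0 : 'I_n -> V)
    (k : nat) : R :=
  (n%:R ^+ k)^-1 *
    \sum_(t : k.-tuple 'I_n) Psi gamma mu xs (saga_run f gamma x0 w0 (tval t)).

End PointSAGA.

(* Main.v *)
Require Import Defs.
From HB Require Import structures.
From mathcomp Require Import all_boot all_order all_algebra.
From mathcomp Require Import all_classical all_reals all_analysis.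
From mathcomp Require Import ring lra.
Import Order.TTheory GRing.Theory Num.Theory.
Import numFieldNormedType.Exports.
Local Open Scope ring_scope.

Section Vec.
Variables (R : realType) (d : nat).
Local Notation V := 'rV[R]_d.
Implicit Types u v w : V.

Lemma sqnormE v : sqnorm v = dotv v v.
Proof. by rewrite /sqnorm /dotv; apply: eq_bigr => j _; rewrite expr2. Qed.

Lemma dotvC u v : dotv u v = dotv v u.
Proof. by apply: eq_bigr => j _; rewrite mulrC. Qed.

Lemma dotvDr u v w : dotv u (v + w) = dotv u v + dotv u w.
Proof. rewrite /dotv -big_split /=; apply: eq_bigr => j _; rewrite !mxE; ring. Qed.

Lemma dotvNr u v : dotv u (- v) = - dotv u v.
Proof. rewrite /dotv -sumrN; apply: eq_bigr => j _; rewrite !mxE; ring. Qed.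

Lemma dotvZr u v (c : R) : dotv u (c *: v) = c * dotv u v.
Proof. rewrite /dotv mulr_sumr; apply: eq_bigr => j _; rewrite !mxE; ring. Qed.

Lemma dotvBr u v w : dotv u (v - w) = dotv u v - dotv u w.
Proof. by rewrite dotvDr dotvNr. Qed.

Lemma dotv0r u : dotv u 0 = 0.
Proof. by rewrite /dotv big1 // => j _; rewrite mxE mulr0. Qed.

Lemma dotv_sumr I (r : seq I) (P : pred I) u (F : I -> V) :
  dotv u (\sum_(i <- r | P i) F i) = \sum_(i <- r | P i) dotv u (F i).
Proof.
elim/big_rec2: _ => [|i y1 y2 _ <-]; first exact: dotv0r.
by rewrite dotvDr.
Qed.

Lemma sqnorm_ge0 v : 0 <= sqnorm v.
Proof. by apply: sumr_ge0 => j _; rewrite sqr_ge0. Qed.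

Lemma sqnormD u v : sqnorm (u + v) = sqnorm u + 2 * dotv u v + sqnorm v.
Proof.
rewrite !sqnormE dotvDr (dotvC (u+v)) (dotvC (u + v)) !dotvDr (dotvC v u).
ring.
Qed.

Lemma sqnormN v : sqnorm (- v) = sqnorm v.
Proof. by rewrite !sqnormE dotvNr dotvC dotvNr opprK. Qed.

Lemma sqnormB u v : sqnorm (u - v) = sqnorm u - 2 * dotv u v + sqnorm v.
Proof. by rewrite sqnormD dotvNr sqnormN; ring. Qed.

Lemma sqnormZ (c : R) v : sqnorm (c *: v) = c ^+ 2 * sqnorm v.
Proof. by rewrite !sqnormE dotvZr dotvC dotvZr; ring. Qed.

Lemma sqnorm_coord v j : (v 0 j) ^+ 2 <= sqnorm v.
Proof.
rewrite /sqnorm (bigD1 j) //= lerDl; apply: sumr_ge0 => i _; exact: sqr_ge0.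
Qed.

Lemma sqnorm_eq0 v : sqnorm v <= 0 -> v = 0.
Proof.
move=> h; apply/rowP => j; rewrite mxE.
have := sqnorm_coord v j => h2.
have : (v 0 j) ^+ 2 = 0 by apply/eqP; rewrite eq_le sqr_ge0 andbT (le_trans h2 h).
by move/eqP; rewrite sqrf_eq0 => /eqP.
Qed.

Lemma young u v (s : R) : 0 < s ->
  2 * dotv u v <= s * sqnorm u + s^-1 * sqnorm v.
Proof.
move=> s0.
have := sqnorm_ge0 (s *: u - v).
rewrite sqnormB sqnormZ dotvC dotvZr dotvC => h.
rewrite -subr_ge0.
have -> : s * sqnorm u + s^-1 * sqnorm v - 2 * dotv u v =
  s^-1 * (s ^+ 2 * sqnorm u - 2 * (s * dotv u v) + sqnorm v).
  by field; rewrite gt_eqF.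
by rewrite mulr_ge0 // invr_ge0 ltW.
Qed.

Lemma sc_comb (f : V -> R) mu (hsc : strongly_convex mu f) x y t :
  0 <= t -> t <= 1 ->
  f (y + t *: (x - y)) <= t * f x + (1 - t) * f y - mu * t * (1 - t) / 2 * sqnorm (x - y).
Proof.
move=> t0 t1.
set z := y + t *: (x - y).
have ex : x - z = (1 - t) *: (x - y) by apply/rowP => j; rewrite !mxE; ring.
have ey : y - z = (- t) *: (x - y) by apply/rowP => j; rewrite !mxE; ring.
have h1 := hsc x z; have h2 := hsc y z.
rewrite ex dotvZr sqnormZ in h1; rewrite ey dotvZr sqnormZ in h2.
have s0 := sqnorm_ge0 (x - y).
set D := dotv _ _ in h1 h2; set S := sqnorm _ in h1 h2 s0 *.
have h1' := ler_wpM2l t0 h1.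
have t1' : 0 <= 1 - t by lra.
have h2' := ler_wpM2l t1' h2.
have -> : t * f x + (1 - t) * f y - mu * t * (1 - t) / 2 * S =
  t * f x + (1 - t) * f y - (t * (mu / 2 * ((1 - t) ^+ 2 * S)) + (1 - t) * (mu / 2 * ((- t) ^+ 2 * S))).
  by ring.
lra.
Qed.

Lemma prox_growth (f : V -> R) mu gamma a p (hsc : strongly_convex mu f)
  (g0 : 0 < gamma) (m0 : 0 < mu)
  (hp : forall z, f p + (2 * gamma)^-1 * sqnorm (p - a) <=
                  f z + (2 * gamma)^-1 * sqnorm (z - a)) q :
  f p + (2 * gamma)^-1 * sqnorm (p - a) + (mu / 2 + (2 * gamma)^-1) * sqnorm (q - p)
  <= f q + (2 * gamma)^-1 * sqnorm (q - a).
Proof.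
set k := (2 * gamma)^-1.
have k0 : 0 < k by rewrite invr_gt0 mulr_gt0.
set v := q - p; set u := p - a.
have eq1 : q - a = u + v by apply/rowP => j; rewrite !mxE; ring.
rewrite eq1 sqnormD.
have S0 := sqnorm_ge0 v.
set S := sqnorm v in S0 *; set D := dotv u v; set U := sqnorm u.
apply/ler_addgt0Pr => e e0.
set C := (mu / 2 + k) * S.
have C0 : 0 <= C by rewrite mulr_ge0 // addr_ge0 // ?ltW // divr_gt0.
set t := e / (C + e).
have Ce0 : 0 < C + e by lra.
have t0 : 0 < t by rewrite divr_gt0.
have tCe : t * (C + e) = e by rewrite /t mulrAC -mulrA mulfV ?gt_eqF // mulr1.
have t1 : t <= 1 by nra.
have h1 := hp (p + t *: v).
have eq2 : p + t *: v - a = u + t *: v by apply/rowP => j; rewrite !mxE; ring.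
rewrite -/u eq2 -/k sqnormD dotvZr sqnormZ -/U -/D -/S in h1.
have h2 := @sc_comb f mu hsc q p t (ltW t0) t1.
rewrite -/v -/S in h2.
have h3 : 0 <= t * (f q - f p + 2 * k * D + k * t * S - mu * (1 - t) / 2 * S).
  have -> : t * (f q - f p + 2 * k * D + k * t * S - mu * (1 - t) / 2 * S) =
    (t * f q + (1 - t) * f p - mu * t * (1 - t) / 2 * S) + k * (U + 2 * (t * D) + t ^+ 2 * S)
     - (f p + k * U) by ring.
  lra.
have h4 : 0 <= f q - f p + 2 * k * D + k * t * S - mu * (1 - t) / 2 * S.
  by move: h3; rewrite pmulr_rge0.
have h5 : t * C <= e by nra.
rewrite /C in h5.
rewrite /C; clearbody t k; lra.
Qed.

Lemma prox_contract (f : V -> R) mu gamma a p q (hsc : strongly_convex mu f)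
  (g0 : 0 < gamma) (m0 : 0 < mu)
  (hp : forall z, f p + (2 * gamma)^-1 * sqnorm (p - a) <=
                  f z + (2 * gamma)^-1 * sqnorm (z - a)) :
  (1 + gamma * mu) ^+ 2 * sqnorm (p - q) <= sqnorm (a - (q + gamma *: grad f q)).
Proof.
have G1 := @prox_growth f mu gamma a p hsc g0 m0 hp q.
have G2 := hsc p q.
set G := grad f q in G2 *.
set w := p - q in G2 *; set r := a - (q + gamma *: G).
have e1 : p - a = w - (r + gamma *: G) by apply/rowP => j; rewrite !mxE; ring.
have e2 : q - a = - (r + gamma *: G) by apply/rowP => j; rewrite !mxE; ring.
have e3 : q - p = - w by apply/rowP => j; rewrite !mxE; ring.
rewrite e1 e2 e3 !sqnormN sqnormB dotvDr dotvZr in G1.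
rewrite (dotvC G w) in G2.
set k := (2 * gamma)^-1 in G1.
have hk : k * (2 * gamma) = 1 by rewrite mulVf // gt_eqF // mulr_gt0.
have S0 := sqnorm_ge0 w.
set S := sqnorm w in G1 G2 S0 *.
set D := dotv w r in G1 *; set DG := dotv w G in G1 G2.
set RG := sqnorm (r + gamma *: G) in G1.
have H : (1 + gamma * mu) * S <= D.
  have hk1 : (k * (2 * gamma) - 1) * DG = 0 by rewrite hk subrr mul0r.
  have hk2 : (k * (2 * gamma) - 1) * D = 0 by rewrite hk subrr mul0r.
  have hk3 : (k * (2 * gamma) - 1) * S = 0 by rewrite hk subrr mul0r.
  have H1 : 0 <= 2 * k * D - (2 * k + mu) * S by lra.
  have H2 := mulr_ge0 (ltW g0) H1.
  lra.
have s0 : 0 < 1 + gamma * mu by rewrite ltr_pwDl // mulr_ge0 // ltW.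
have Y := @young w r _ s0.
rewrite -/D -/S in Y.
have Y2 := ler_wpM2l (ltW s0) Y.
rewrite mulrDr mulVKf ?gt_eqF // in Y2.
nra.
Qed.

Lemma cont_sum (I : Type) (r : seq I) (F : I -> V -> R) :
  (forall i, continuous (F i)) -> continuous (fun x => \sum_(i <- r) F i x).
Proof.
move=> hF; elim: r => [|i r IH].
  under eq_fun do rewrite big_nil; exact: cst_continuous.
under eq_fun do rewrite big_cons.
by move=> x; apply: continuousD; [exact: hF | exact: IH].
Qed.

Lemma cont_sqnorm (y : V) : continuous (fun x : V => sqnorm (x - y)).
Proof.
apply: cont_sum => j.
have h : continuous (fun z : V => z 0 j - y 0 j).
  move=> x; apply: continuousB; [exact: coord_continuous | exact: cst_continuous].
have -> : (fun z : V => (z - y) 0 j ^+ 2) = (fun z : V => (z 0 j - y 0 j) * (z 0 j - y 0 j)).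
  by apply/funext => z; rewrite !mxE expr2.
move=> x; exact: (continuousM (h x) (h x)).
Qed.

Local Open Scope classical_set_scope.
Lemma prox_exists (f : V -> R) mu gamma y (hsc : strongly_convex mu f)
  (hc : continuous f) (g0 : 0 < gamma) (m0 : 0 < mu) :
  exists p, forall z, f p + (2 * gamma)^-1 * sqnorm (p - y) <=
                  f z + (2 * gamma)^-1 * sqnorm (z - y).
Proof.
set k := (2 * gamma)^-1.
have k0 : 0 < k by rewrite invr_gt0 mulr_gt0.
pose phi z := f z + k * sqnorm (z - y).
have lb z : f 0 - sqnorm (grad f 0) / mu + mu / 4 * sqnorm z <= phi z.
  have h := hsc z 0; rewrite subr0 in h.
  have m2 : 0 < mu / 2 by rewrite divr_gt0.
  have Y := @young z (- grad f 0) _ m2.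
  rewrite sqnormN dotvNr dotvC invf_div in Y.
  have := sqnorm_ge0 (z - y).
  have := sqnorm_ge0 z.
  rewrite /phi.
  set G := grad f 0 in h Y *; set Dz := dotv G z in h Y.
  move=> s1 s2.
  have e1 : 2 / mu * sqnorm G = 2 * (sqnorm G / mu) by ring.
  have e2 : mu / 2 * sqnorm z = 2 * (mu / 4 * sqnorm z) by field.
  rewrite e1 e2 in Y.
  have := mulr_ge0 (ltW k0) s2.
  lra.
set B := 4 / mu * (phi 0 - f 0 + sqnorm (grad f 0) / mu).
set M := `|B| + 1.
have M0 : 0 < M by rewrite ltr_pwDr // normr_ge0.
have BM : B < M ^+ 2.
  have := ler_norm B; rewrite /M => hB.
  have := normr_ge0 B; nra.
pose K : set V := fun v => forall i, (`[- M, M]%classic : set R) (v ord0 i).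
have cK : compact K.
  exact: (@rV_compact _ d (fun=> `[- M, M]%classic) (fun=> @segment_compact _ _ _)).
have K0 : K 0 by move=> i; rewrite /= in_itv /= mxE oppr_le0 (ltW M0).
have cphi : continuous phi.
  move=> x; exact: (continuousD (hc x) (continuousM (@cst_continuous _ _ k x) (cont_sqnorm y x))).
have cphiK : {within K, continuous phi} by apply: continuous_subspaceT.
have [c cK' cmin] := compact_EVT_min (ex_intro _ 0 K0) cK cphiK.
exists c => z.
have hc0 : phi c <= phi 0 by apply: cmin; rewrite inE.
case: (pselect (K z)) => Kz; first by apply: cmin; rewrite inE.
move/existsNP: Kz => [i /negP]; rewrite /= in_itv /= negb_and -!ltNge => hi.
have hz : M ^+ 2 < sqnorm z.
  apply: (lt_le_trans _ (sqnorm_coord z i)).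
  by case/orP: hi => hi; nra.
have := lb z.
have := lb 0.
rewrite /B in BM.
move=> _ hl.
have : phi 0 < phi z.
  have e : phi 0 = (phi 0 - f 0 + sqnorm (grad f 0) / mu) + (f 0 - sqnorm (grad f 0) / mu) by ring.
  set W := phi 0 - f 0 + sqnorm (grad f 0) / mu in BM e.
  have : W < mu / 4 * sqnorm z.
    have h4 : W = mu / 4 * (4 / mu * W) by field; rewrite gt_eqF.
    rewrite h4 ltr_pM2l ?divr_gt0 //.
    exact: lt_trans BM hz.
  lra.
rewrite /phi => h; apply: ltW; exact: le_lt_trans hc0 h.
Qed.

Lemma prox_min (f : V -> R) mu gamma y (hsc : strongly_convex mu f)
  (hc : continuous f) (g0 : 0 < gamma) (m0 : 0 < mu) z :
  f (prox gamma f y) + (2 * gamma)^-1 * sqnorm (prox gamma f y - y) <=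
  f z + (2 * gamma)^-1 * sqnorm (z - y).
Proof.
have [p hp] := @prox_exists f mu gamma y hsc hc g0 m0.
have := @xgetPex _ 0 [set x : V | forall z, f x + (2 * gamma)^-1 * sqnorm (x - y) <= f z + (2 * gamma)^-1 * sqnorm (z - y)] (ex_intro _ p hp).
exact.
Qed.

End Vec.

Section Main.
Variables (R : realType) (d n : nat) (hn : (0 < n)%N).
Local Notation V := 'rV[R]_d.
Variables (f : 'I_n -> V -> R) (mu nu gamma : R) (xs : V).
Hypotheses (hmu : 0 < mu) (hg : 0 < gamma).
Hypothesis hsc : forall i, strongly_convex mu (f i).
Hypothesis hcont : forall i, continuous (f i).
Hypothesis hnu_ineq : forall xx : 'I_n -> V,
     n%:R^-1 * \sum_(j < n)
        sqnorm (grad (f j) (xx j) - n%:R^-1 *: \sum_(i < n) grad (f i) (xx i)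
                - grad (f j) xs)
     <= nu ^+ 2 * (n%:R^-1 * \sum_(j < n) sqnorm (xx j - xs)).

Lemma n0 : (n%:R : R) != 0.
Proof. by rewrite pnatr_eq0 -lt0n. Qed.

Lemma sum_const_n (c : R) : \sum_(i < n) c = n%:R * c.
Proof. by rewrite sumr_const card_ord mulr_natl. Qed.

Lemma sum_const_nv (c : V) : \sum_(i < n) c = n%:R *: c.
Proof. by rewrite sumr_const card_ord scaler_nat. Qed.

Lemma grad_sum0 : \sum_(i < n) grad (f i) xs = 0.
Proof.
have h := hnu_ineq (fun _ => xs).
have r0 : \sum_(j < n) sqnorm (xs - xs) = 0.
  apply: big1 => j _; rewrite subrr /sqnorm big1 // => k _; rewrite mxE expr0n.
  by [].
rewrite /= r0 mulr0 mulr0 in h.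
set A := n%:R^-1 *: _ in h.
have e : forall j : 'I_n, sqnorm (grad (f j) xs - A - grad (f j) xs) = sqnorm A.
  by move=> j; rewrite (_ : _ - A - _ = - A) ?sqnormN //; apply/rowP => k; rewrite !mxE; ring.
rewrite (eq_bigr (fun=> sqnorm A)) in h; last by move=> j _; exact: e j.
rewrite sum_const_n mulrA mulVf ?n0 // mul1r in h.
have := @sqnorm_eq0 _ _ _ h; rewrite /A => /(congr1 (fun v => n%:R *: v)).
by rewrite scalerA mulfV ?n0 // scale1r scaler0.
Qed.


Definition err (w : 'I_n -> V) (i : 'I_n) : V :=
  grad (f i) (w i) - n%:R^-1 *: \sum_(j < n) grad (f j) (w j) - grad (f i) xs.

Lemma err_sum0 w : \sum_(i < n) err w i = 0.
Proof.
rewrite /err !sumrB sum_const_nv scalerA mulfV ?n0 // scale1r subrr grad_sum0.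
by rewrite subr0.
Qed.

Lemma sum_x x w :
  \sum_(i < n) sqnorm ((x - xs) + gamma *: err w i) =
  n%:R * sqnorm (x - xs) + gamma ^+ 2 * \sum_(i < n) sqnorm (err w i).
Proof.
under eq_bigr do rewrite sqnormD dotvZr sqnormZ.
rewrite !big_split /= sum_const_n -!mulr_sumr -dotv_sumr err_sum0 dotv0r.
by rewrite !mulr0 addr0.
Qed.

Lemma sum_w x w i :
  \sum_(j < n) sqnorm ((saga_step f gamma (x, w) i).2 j - xs) =
  sqnorm ((saga_step f gamma (x, w) i).1 - xs) +
   (\sum_(j < n) sqnorm (w j - xs) - sqnorm (w i - xs)).
Proof.
rewrite /saga_step /= (bigD1 i) //= eqxx [X in _ = _ + (X - _)](bigD1 i) //=.
congr (_ + _); rewrite [RHS]addrC addKr; apply: eq_bigr => j /negbTE ->; done.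
Qed.
Lemma step_x x w i :
  (1 + gamma * mu) ^+ 2 * sqnorm ((saga_step f gamma (x, w) i).1 - xs) <=
  sqnorm ((x - xs) + gamma *: err w i).
Proof.
rewrite /saga_step /=.
set a := x + gamma *: _.
have H := @prox_contract R d (f i) mu gamma a (prox gamma (f i) a) xs (hsc i) hg hmu
  (@prox_min R d (f i) mu gamma a (hsc i) (hcont i) hg hmu).
have -> : x - xs + gamma *: err w i = a - (xs + gamma *: grad (f i) xs).
  by rewrite /err /a scalerBr opprD addrACA.
exact: H.
Qed.


Definition rho : R := Num.max ((1 + gamma * mu)^-1)
  ((1 + gamma * mu)^-1 * (gamma * nu ^+ 2 / (mu * n%:R)) + 1 - n%:R^-1).

Lemma psi_step x w :
  n%:R^-1 * \sum_(i < n) Psi gamma mu xs (saga_step f gamma (x, w) i)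
  <= rho * Psi gamma mu xs (x, w).
Proof.
rewrite /Psi /=.
under eq_bigr do rewrite sum_w.
set S := \sum_(j < n) sqnorm (w j - xs).
set X := sqnorm (x - xs).
set P := fun i => sqnorm ((saga_step f gamma (x, w) i).1 - xs).
have -> : \sum_(i < n) (P i + gamma * mu * (P i + (S - sqnorm (w i - xs)))) =
   (1 + gamma * mu) * \sum_(i < n) P i + gamma * mu * (n%:R * S - S).
  rewrite mulr_sumr -sum_const_n -[X in _ - X]/(S) {3}/S -sumrB mulr_sumr -big_split /=.
  by apply: eq_bigr => i _; ring.
set Q := \sum_(i < n) P i.
set s := 1 + gamma * mu.
have s0 : 0 < s by rewrite ltr_pwDl // mulr_ge0 // ltW.
have ni0 : 0 < n%:R^-1 :> R by rewrite invr_gt0 ltr0n.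
have nni : n%:R^-1 * n%:R = 1 :> R by rewrite mulVf ?n0.
set ni := n%:R^-1 in ni0 nni *.
have X0 : 0 <= X by exact: sqnorm_ge0.
have S0 : 0 <= S by apply: sumr_ge0 => j _; exact: sqnorm_ge0.
set E := \sum_(i < n) sqnorm (err w i).
have hE : E <= nu ^+ 2 * S.
  have := hnu_ineq w; rewrite -/E -/S -/ni mulrCA ler_pM2l //.
have hQ0 : s ^+ 2 * Q <= n%:R * X + gamma ^+ 2 * E.
  rewrite /Q mulr_sumr -sum_x; apply: ler_sum => i _; exact: step_x.
have hQ : s ^+ 2 * Q <= n%:R * X + gamma ^+ 2 * (nu ^+ 2 * S).
  by apply: (le_trans hQ0); rewrite lerD2l ler_wpM2l // sqr_ge0.
set c := s^-1.
have cs : c * s = 1 by rewrite mulVf // gt_eqF.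
have c0 : 0 < c by rewrite invr_gt0.
have h1 : s * Q <= c * (n%:R * X + gamma ^+ 2 * (nu ^+ 2 * S)).
  have -> : s * Q = c * (s ^+ 2 * Q) by rewrite expr2 !mulrA cs mul1r.
  by rewrite ler_pM2l.
have r1 : c <= rho by rewrite /rho le_max lexx.
have r2 : c * (gamma * nu ^+ 2 / (mu * n%:R)) + 1 - ni <= rho.
  by rewrite /rho le_max lexx orbT.
have e2 : (c * (gamma * nu ^+ 2 / (mu * n%:R)) + 1 - ni) * (gamma * mu * S) =
   c * gamma ^+ 2 * nu ^+ 2 * ni * S + gamma * mu * (1 - ni) * S.
  rewrite /ni; field; rewrite ?n0 ?gt_eqF //.
have gm0 : 0 <= gamma * mu * S by rewrite !mulr_ge0 // ltW.
have i1 := ler_wpM2r X0 r1.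
have i2 := ler_wpM2r gm0 r2.
rewrite e2 in i2.
have i3 := ler_wpM2l (ltW ni0) h1.
have e3 : ni * (c * (n%:R * X + gamma ^+ 2 * (nu ^+ 2 * S))) =
   c * X + c * gamma ^+ 2 * nu ^+ 2 * ni * S.
  by rewrite mulrDr mulrDr !mulrA (mulrC ni c) -(mulrA c ni) nni mulr1; ring.
rewrite e3 in i3.
have e4 : ni * (s * Q + gamma * mu * (n%:R * S - S)) =
  ni * (s * Q) + gamma * mu * S - gamma * mu * ni * S.
  have h := congr1 (fun t => t * (gamma * mu * S)) nni; rewrite /= mul1r in h.
  lra.
rewrite e4 mulrDr.
lra.
Qed.

Lemma rho_ge0 : 0 <= rho.
Proof.
have : 0 <= (1 + gamma * mu)^-1 by rewrite invr_ge0 addr_ge0 // mulr_ge0 // ltW.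
move=> h; apply: (le_trans h); rewrite /rho le_max lexx //.
Qed.

Lemma sum_tuple_cons (T : finType) k (F : k.+1.-tuple T -> R) :
  \sum_(t : k.+1.-tuple T) F t = \sum_(i : T) \sum_(t : k.-tuple T) F [tuple of i :: t].
Proof.
rewrite pair_big /=.
rewrite (reindex (fun p : T * k.-tuple T => [tuple of p.1 :: p.2])) //=.
exists (fun t => (thead t, behead_tuple t)) => [[a t] _ | t _] /=.
  by congr pair; apply: val_inj.
by apply: val_inj; rewrite /= [in RHS](tuple_eta t).
Qed.

Lemma run_cons x0 w0 i s :
  saga_run f gamma x0 w0 (i :: s) =
  saga_run f gamma (saga_step f gamma (x0, w0) i).1 (saga_step f gamma (x0, w0) i).2 s.
Proof.
rewrite /saga_run; change (foldl (saga_step f gamma) (saga_step f gamma (x0, w0) i) s = foldl (saga_step f gamma) ((saga_step f gamma (x0, w0) i).1, (saga_step f gamma (x0, w0) i).2) s).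
by case: (saga_step f gamma (x0, w0) i).
Qed.

Lemma epsi_bound k : forall x0 w0,
  EPsi f gamma mu xs x0 w0 k <= rho ^+ k * Psi gamma mu xs (x0, w0).
Proof.
elim: k => [|k IH] x0 w0.
  rewrite /EPsi expr0 invr1 mul1r expr0 mul1r.
  rewrite (eq_bigr (fun _ => Psi gamma mu xs (x0, w0))); last first.
    by move=> t _; rewrite (tuple0 t).
  by rewrite sumr_const card_tuple card_ord expn0.
rewrite /EPsi sum_tuple_cons.
under eq_bigr do under eq_bigr do rewrite /= run_cons.
rewrite exprS invfM -mulrA mulr_sumr.
have -> : \sum_(i < n) (n%:R ^+ k)^-1 *
    \sum_(t : k.-tuple 'I_n) Psi gamma mu xs (saga_run f gamma
      (saga_step f gamma (x0, w0) i).1 (saga_step f gamma (x0, w0) i).2 t) =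
  \sum_(i < n) EPsi f gamma mu xs (saga_step f gamma (x0, w0) i).1
      (saga_step f gamma (x0, w0) i).2 k by [].
apply: (le_trans (y := n%:R^-1 * \sum_(i < n) (rho ^+ k *
     Psi gamma mu xs (saga_step f gamma (x0, w0) i)))).
  rewrite ler_wpM2l ?invr_ge0 ?ler0n //; apply: ler_sum => i _.
  by have := IH (saga_step f gamma (x0, w0) i).1 (saga_step f gamma (x0, w0) i).2;
     rewrite -surjective_pairing.
rewrite -mulr_sumr mulrCA exprSr -mulrA ler_wpM2l ?exprn_ge0 ?rho_ge0 //.
exact: psi_step.
Qed.

End Main.

Lemma max_expn (R : realType) (a b : R) k : 0 <= a -> 0 <= b ->
  Num.max (a ^+ k) (b ^+ k) = (Num.max a b) ^+ k.
Proof.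
move=> a0 b0; case: (leP a b) => h.
  have hk : a ^+ k <= b ^+ k by apply: lerXn2r; rewrite ?nnegrE.
  by rewrite (max_r hk).
have hk : b ^+ k <= a ^+ k by apply: lerXn2r; rewrite ?nnegrE // ltW.
by rewrite (max_l hk).
Qed.

Theorem mainTheorem12 (R : realType) (d n : nat) (hn : (0 < n)%N)
  (f : 'I_n -> 'rV[R]_d -> R) (mu nu : R) (hmu : 0 < mu) (hnu : 0 < nu)
  (hdiff : forall i x, differentiable (f i) x)
  (hsc : forall i, strongly_convex mu (f i))
  (xs : 'rV[R]_d)
  (hmin : forall x, n%:R^-1 * \sum_(i < n) f i xs <= n%:R^-1 * \sum_(i < n) f i x)
  (hnu_ineq : forall xx : 'I_n -> 'rV[R]_d,
     n%:R^-1 * \sum_(j < n)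
        sqnorm (grad (f j) (xx j) - n%:R^-1 *: \sum_(i < n) grad (f i) (xx i)
                - grad (f j) xs)
     <= nu ^+ 2 * (n%:R^-1 * \sum_(j < n) sqnorm (xx j - xs)))
  (x0 : 'rV[R]_d) (w0 : 'I_n -> 'rV[R]_d) (gamma : R) (hgamma : 0 < gamma) (k : nat) :
  EPsi f gamma mu xs x0 w0 k <=
    Num.max (((1 + gamma * mu)^-1) ^+ k)
            (((1 + gamma * mu)^-1 * (gamma * nu ^+ 2 / (mu * n%:R)) + 1 - n%:R^-1) ^+ k)
    * Psi gamma mu xs (x0, w0).
Proof.
have hcont i : continuous (f i) := fun x => differentiable_continuous (hdiff i x).
have H := @epsi_bound R d n hn f mu nu gamma xs hmu hgamma hsc hcont hnu_ineq k x0 w0.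
have c0 : 0 < 1 + gamma * mu by rewrite ltr_pwDl // mulr_ge0 // ltW.
rewrite max_expn.
- exact: H.
- by rewrite invr_ge0 ltW.
- have h1 : 0 <= (1 + gamma * mu)^-1 * (gamma * nu ^+ 2 / (mu * n%:R)).
    apply: mulr_ge0; first by rewrite invr_ge0 ltW.
    apply: mulr_ge0; first by apply: mulr_ge0; [exact: ltW | exact: sqr_ge0].
    by rewrite invr_ge0; apply: mulr_ge0; [exact: ltW | exact: ler0n].
  have h2 : n%:R^-1 <= 1 :> R by rewrite invf_le1 ?ler1n ?ltr0n.
  lra.
Qed.
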